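(* Let $\Gamma$ be a Deza graph with parameters $(n,k,k-1,a)$, $k>1$, $\beta=1$. For an $NA$-vertex $x$, $x''=x$ (where $x''=(x')'$, which is defined since $x'$ is an $NA$-vertex).
   Context: A Deza graph with parameters $(n,k,b,a)$, $a\le b$, is a $k$-regular graph on $n$ vertices in which any two distinct vertices have $a$ or $b$ common neighbours; $\beta$ is the number of vertices $u\ne v$ with exactly $b$ common neighbours with a given vertex $v$. Since $\beta=1$, for each vertex $x$ let $x_b$ denote the unique vertex having $b=k-1$ common neighbours with $x$. A vertex $x$ is an $A$-vertex if $x$ is adjacent to $x_b$, and an $NA$-vertex otherwise. For an $NA$-vertex $x$, $x'$ denotes the unique neighbour of $x$ not adjacent to $x_b$; for an $NA$-vertex $x$ the vertex $x'$ is again an $NA$-vertex. *)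

(* Defs.v *)
From mathcomp Require Import all_boot.
Set Implicit Arguments. Unset Strict Implicit. Unset Printing Implicit Defensive.

Section Deza.
Variables (T : finType) (e : rel T).

Definition common (x y : T) : nat := #|[set z | e x z && e y z]|.

Definition deza_graph (n k b a : nat) : Prop :=
  #|T| = n /\ symmetric e /\ irreflexive e /\
  (forall x, #|[set y | e x y]| = k) /\
  (forall x y, x != y -> common x y = a \/ common x y = b) /\
  a <= b.

Definition beta (b : nat) (v : T) : nat := #|[set u | (u != v) && (common u v == b)]|.

(* x_b : the (unique, when beta = 1) vertex with b common neighbours with x *)
Definition xb (b : nat) (x : T) : T := odflt x [pick u | (u != x) && (common u x == b)].

Definition A_vertex (b : nat) (x : T) : bool := e x (xb b x).
Definition NA_vertex (b : nat) (x : T) : bool := ~~ e x (xb b x).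

Definition xprime (b : nat) (x : T) : T := odflt x [pick y | e x y && ~~ e y (xb b x)].

End Deza.

(* Main.v *)
Require Import Defs.
From mathcomp Require Import all_boot.
From mathcomp Require Import zify.

Set Implicit Arguments.
Section L.
Variables (T : finType) (e : rel T) (n k a : nat).
Hypothesis hD : deza_graph e n k k.-1 a.
Hypothesis hk : 1 < k.
Hypothesis hB : forall v : T, beta e k.-1 v = 1.

Lemma esym x y : e x y = e y x.
Proof. by case: hD => _ [s _]; apply: s. Qed.

Lemma comm_sym x y : common e x y = common e y x.
Proof. by rewrite /common; apply: eq_card => z; rewrite !inE andbC. Qed.

Lemma deg x : #|[set y | e x y]| = k.
Proof. by case: hD => _ [_ [_ [d _]]]; apply: d. Qed.

Lemma comm_xx x : common e x x = k.
Proof. by rewrite /common -(deg x); apply: eq_card => z; rewrite !inE andbb. Qed.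

Lemma xbP v : (xb e k.-1 v != v) /\ common e (xb e k.-1 v) v = k.-1 /\
  (forall u, u != v -> common e u v = k.-1 -> u = xb e k.-1 v).
Proof.
have := hB v; rewrite /beta => /eqP/cards1P [w hw].
have hw' : forall u, ((u != v) && (common e u v == k.-1)) = (u == w).
  by move=> u; rewrite -[RHS]in_set1 -hw inE.
have hxw : xb e k.-1 v = w.
  rewrite /xb; case: pickP => [u hu|h]; last by move: (h w); rewrite hw' eqxx.
  by rewrite /=; apply/eqP; rewrite -hw'.
rewrite hxw; have := hw' w; rewrite eqxx => /andP [h1 /eqP h2].
split => //; split => // u h3 h4; apply/eqP; rewrite -hw' h3 /=; exact/eqP.
Qed.

Lemma a_le : a <= k.-1.
Proof. by case: hD => _ [_ [_ [_ [_ h]]]]. Qed.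

Lemma comm_val u q : common e u q =
  a + (k - a) * (q == u) + (k.-1 - a) * (q == xb e k.-1 u).
Proof.
have [h1 [h2 h3]] := xbP u.
have ha := a_le.
have h1' : (u == xb e k.-1 u) = false by rewrite eq_sym (negbTE h1).
case: (eqVneq q u) => [->|hq]; first by rewrite comm_xx h1' /=; lia.
case: (eqVneq q (xb e k.-1 u)) => [->|hq2].
  by rewrite comm_sym h2 /=; lia.
case: hD => _ [_ [_ [_ [hc _]]]].
rewrite /=; case: (hc q u hq) => h.
  by rewrite comm_sym h; lia.
by move: (h3 q hq h) => /eqP; rewrite (negbTE hq2).
Qed.

Definition W u v := \sum_(q : T) (e q v : nat) * common e u q.

Lemma sum_e v : \sum_(q : T) (e q v : nat) = k.
Proof.
rewrite -(deg v) -sum1_card [RHS]big_mkcond /=.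
by apply: eq_bigr => q _; rewrite inE esym; case: (e q v).
Qed.

Lemma sum_pt v u : \sum_(q : T) (e q v : nat) * (q == u) = e u v.
Proof.
rewrite (bigD1 u) //= eqxx muln1 big1 ?addn0 // => q /negbTE ->; by rewrite muln0.
Qed.

Lemma W_val u v : W u v = a * k + (k - a) * e u v + (k.-1 - a) * e (xb e k.-1 u) v.
Proof.
rewrite /W; under eq_bigr => q _ do rewrite comm_val !mulnDr.
rewrite !big_split /=.
have E1 : \sum_(q : T) (e q v : nat) * a = a * k.
  by rewrite -(sum_e v) big_distrr /=; apply: eq_bigr => q _; rewrite mulnC.
have E2 : forall c w, \sum_(q : T) (e q v : nat) * (c * (q == w)) = c * e w v.
  move=> c w; rewrite -(sum_pt v w) big_distrr /=; apply: eq_bigr => q _.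
  by rewrite mulnCA.
by rewrite E1 !E2.
Qed.

Lemma W_sym u v : W u v = W v u.
Proof.
rewrite /W /common.
have E : forall x y, #|[set z | e x z && e y z]| = \sum_(z : T) ((e x z : nat) * e y z).
  move=> x y; rewrite -sum1_card [LHS]big_mkcond /=.
  by apply: eq_bigr => z _; rewrite inE; case: (e x z); case: (e y z).
under eq_bigr => q _ do rewrite E big_distrr.
under [RHS]eq_bigr => q _ do rewrite E big_distrr.
rewrite exchange_big /=; apply: eq_bigr => q _; apply: eq_bigr => z _.
by rewrite (esym z v) (esym u q) (esym z q) mulnCA.
Qed.
Lemma a_lt (x0 : T) : a < k.-1.
Proof.
rewrite ltn_neqAle a_le andbT; apply/eqP => ha.
case: hD => hn [_ [hirr [_ [hc _]]]].
have := hB x0; rewrite /beta => hb.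
have : #|[set y | e x0 y]| <= 1.
  rewrite -hb; apply: subset_leq_card; apply/subsetP => y; rewrite !inE => hy.
  have hne : y != x0 by apply/eqP => E; move: hy; rewrite E hirr.
  by rewrite hne /=; case: (hc y x0 hne) => ->; rewrite ?ha.
by rewrite deg; lia.
Qed.

Lemma key u v : e (xb e k.-1 u) v = e (xb e k.-1 v) u.
Proof.
have := W_sym u v; rewrite !W_val (esym v u) => h.
have hl := a_lt u.
move: h; case: (e (xb e k.-1 u) v); case: (e (xb e k.-1 v) u) => //=; lia.
Qed.

Lemma Dcard y : #|[set t | e y t] :\: [set t | e (xb e k.-1 y) t]| = 1.
Proof.
have := cardsID [set t | e (xb e k.-1 y) t] [set t | e y t].
rewrite deg.
have -> : [set t | e y t] :&: [set t | e (xb e k.-1 y) t] = [set t | e y t && e (xb e k.-1 y) t].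
  by apply/setP => t; rewrite !inE.
have [_ [h2 _]] := xbP y.
move: h2; rewrite comm_sym /common => ->; lia.
Qed.
End L.
Unset Implicit Arguments.


Theorem lemma11 (T : finType) (e : rel T) (n k a : nat) :
  deza_graph e n k k.-1 a -> 1 < k ->
  (forall v : T, beta e k.-1 v = 1) ->
  forall x : T, NA_vertex e k.-1 x ->
  xprime e k.-1 (xprime e k.-1 x) = x.
Proof.
move=> hD hk hB x hNA.
have ex : exists y, e x y && ~~ e y (xb e k.-1 x).
  have := Dcard hD hk hB x => /eqP/cards1P [w hw].
  have : w \in [set w] by rewrite inE.
  rewrite -hw !inE => /andP [h1 h2]; exists w; by rewrite h2 (esym hD) h1.
have [y [hxy hyb] ->] : exists y, [/\ e x y, ~~ e y (xb e k.-1 x) & xprime e k.-1 x = y].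
  rewrite /xprime; case: pickP => [y /andP [h1 h2]|h]; first by exists y.
  by case: ex => y hy; move: (h y); rewrite hy.
have hx : (e y x) && ~~ e x (xb e k.-1 y).
  by rewrite (esym hD) hxy /= (esym hD x) (key hD hk hB) (esym hD _ y).
have uniq : forall z, e y z && ~~ e z (xb e k.-1 y) -> z = x.
  move=> z hz; have := Dcard hD hk hB y => /eqP/cards1P [w hw].
  have : z \in [set w].
    by rewrite -hw !inE (esym hD _ z); case/andP: hz => -> ->.
  have : x \in [set w].
    by rewrite -hw !inE (esym hD _ x); case/andP: hx => -> ->.
  by rewrite !inE => /eqP -> /eqP ->.
rewrite /xprime; case: pickP => [z hz|h]; first by apply: uniq.
by move: (h x); rewrite hx.
Qed.
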